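(* Let $f$ and $g$ be Boolean functions with $var(f)\cap var(g)=\emptyset$, and let $a$ be a truth assignment to a superset of $var(f)\cup var(g)$. Then $\textit{SR}(f\wedge g,a)=\{t\wedge t'\mid t\in\textit{SR}(f,a),\ t'\in\textit{SR}(g,a)\}$.
   Context: A term is a conjunction of literals; $t$ is an implicant of $f$ if $t\models f$, and a prime implicant if no term obtained from $t$ by deleting one literal is an implicant of $f$. $var(f)$ is the set of variables of $f$. For a Boolean function $f$ and an assignment $a$ to a superset of $var(f)$, $\textit{SR}(f,a)$ denotes the set of prime implicants of $f$ that are satisfied by $a$ (the sufficient reasons for $a$ given $f$ when $a$ satisfies $f$). *)

(* Defs.v *)
From mathcomp Require Import all_boot.
Set Implicit Arguments. Unset Strict Implicit. Unset Printing Implicit Defensive.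

(* Variables range over a finite type V; a (total) truth assignment is a
   finite function V -> bool; a Boolean function is a predicate on assignments. *)
Definition assignment (V : finType) := {ffun V -> bool}.

(* A literal (v, b) asserts v = b; a term (conjunction of literals) is a
   finite set of literals. *)
Definition term (V : finType) := {set V * bool}.

Definition sat_term (V : finType) (t : term V) (a : assignment V) : bool :=
  [forall l in t, a l.1 == l.2].

Definition implicant (V : finType) (f : assignment V -> bool) (t : term V) : bool :=
  [forall a : assignment V, sat_term t a ==> f a].

Definition prime_implicant (V : finType) (f : assignment V -> bool) (t : term V) : bool :=
  implicant f t && [forall l in t, ~~ implicant f (t :\ l)].

Definition SR (V : finType) (f : assignment V -> bool) (a : assignment V) : {set term V} :=
  [set t : term V | prime_implicant f t && sat_term t a].

Definition flip (V : finType) (a : assignment V) (v : V) : assignment V :=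
  [ffun w => if w == v then ~~ a w else a w].

Definition vars (V : finType) (f : assignment V -> bool) : {set V} :=
  [set v | [exists a : assignment V, f a != f (flip a v)]].

(* Main.v *)
Require Import Defs.
From mathcomp Require Import all_boot.
Set Implicit Arguments. Unset Strict Implicit. Unset Printing Implicit Defensive.

Section S.
Variable V : finType.
Implicit Types (f g h : assignment V -> bool) (t s : term V) (a b c : assignment V).

Lemma iapp {b1 b2 : bool} : b1 ==> b2 -> b1 -> b2.
Proof. by move/implyP. Qed.

Definition restr (S : {set V}) t : term V := [set l in t | l.1 \in S].

Lemma dep f b c : (forall v, v \in vars f -> b v = c v) -> f b = f c.
Proof.
move=> H.
move: {2}#|[set v | b v != c v]| (leqnn #|[set v | b v != c v]|) => n.
elim: n b H => [|n IH] b H Hn.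
  have : [set v | b v != c v] == set0 by rewrite -cards_eq0 -leqn0.
  move/eqP/setP => E; congr f; apply/ffunP => v.
  by move: (E v); rewrite !inE; move/negbFE/eqP.
have [E|/set0Pn[v]] := eqVneq [set v | b v != c v] set0.
  congr f; apply/ffunP => w.
  by move/setP: E => /(_ w); rewrite !inE; move/negbFE/eqP.
rewrite inE => Hv.
have nv : v \notin vars f.
  by apply/negP => /H E; rewrite E eqxx in Hv.
have -> : f b = f (flip b v).
  move: nv; rewrite inE negb_exists => /forallP /(_ b).
  by rewrite negbK => /eqP.
apply: IH.
  move=> w wf; rewrite /flip ffunE.
  case: eqP => [ew|_]; last exact: H.
  by subst; rewrite wf in nv.
have -> : [set w | flip b v w != c w] = [set w | b w != c w] :\ v.
  apply/setP => w; rewrite !inE /flip ffunE.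
  case: (w =P v) => [->|_] //=.
  by move: Hv; case: (b v); case: (c v).
move: Hn; rewrite (cardsD1 v) inE Hv //.
Qed.

Lemma sat_sub s t a : s \subset t -> sat_term t a -> sat_term s a.
Proof.
move=> st /forallP H; apply/forallP => l; apply/implyP => ls.
exact: (iapp (H l) (subsetP st l ls)).
Qed.

Lemma impl_mono f s t : s \subset t -> implicant f s -> implicant f t.
Proof.
move=> st /forallP H; apply/forallP => b; apply/implyP => tb.
exact: (iapp (H b) (sat_sub st tb)).
Qed.

Lemma restr_sub S t : restr S t \subset t.
Proof. by apply/subsetP => l; rewrite inE => /andP[]. Qed.

Lemma restr_impl f t a : sat_term t a ->
  implicant f t = implicant f (restr (vars f) t).
Proof.
move=> ta; apply/idP/idP; last exact/impl_mono/restr_sub.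
move=> /forallP H; apply/forallP => b; apply/implyP => /forallP rb.
pose c : assignment V := [ffun w => if w \in vars f then b w else a w].
have -> : f b = f c.
  by apply: dep => v vf; rewrite ffunE vf.
apply: (iapp (H c)); apply/forallP => l; apply/implyP => lt.
rewrite ffunE; case: ifP => lf.
  by apply: (iapp (rb l)); rewrite inE lt lf.
by move/forallP: ta => /(_ l) /implyP; apply.
Qed.

Lemma mem_restr (S : {set V}) t l : (l \in restr S t) = (l \in t) && (l.1 \in S).
Proof. by rewrite inE. Qed.

Lemma restrD1 (S : {set V}) t (l : V * bool) : restr S (t :\ l) = restr S t :\ l.
Proof. by apply/setP => k; rewrite !inE andbA. Qed.

Lemma restrD1n (S : {set V}) t (l : V * bool) : l.1 \notin S -> restr S (t :\ l) = restr S t.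
Proof.
move=> lS; rewrite restrD1; apply/setP => k; rewrite !inE.
case: eqP => // ->; by rewrite (negbTE lS) andbF.
Qed.

Lemma PI_sub f t a : prime_implicant f t -> sat_term t a ->
  forall l, l \in t -> l.1 \in vars f.
Proof.
move=> /andP[it /forallP pt] ta l lt; apply/contraT => lf.
move: (iapp (pt l) lt); rewrite (@restr_impl f _ a).
  by rewrite restrD1n // -(restr_impl f ta) it.
by apply: sat_sub ta; apply: subsetDl.
Qed.

Lemma restr_id f t a : prime_implicant f t -> sat_term t a -> restr (vars f) t = t.
Proof.
move=> pt ta; apply/setP => l; rewrite inE; case lt: (l \in t) => //=.
exact: (PI_sub pt ta lt).
Qed.

Lemma key1 h f g t a :
  (forall s, implicant h s = implicant f s && implicant g s) ->
  [disjoint vars f & vars g] ->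
  t \in SR h a -> restr (vars f) t \in SR f a.
Proof.
move=> Hh dis; rewrite !inE => /andP[/andP[it /forallP pt] ta].
rewrite Hh in it; case/andP: it => itf itg.
rewrite (sat_sub (restr_sub _ _) ta) andbT; apply/andP; split.
  by rewrite -(restr_impl _ ta).
apply/forallP => l; apply/implyP; rewrite inE => /andP[lt lf].
apply/negP => H.
move: (iapp (pt l) lt); rewrite Hh; apply/negP; rewrite negbK.
have tla : sat_term (t :\ l) a by apply: sat_sub ta; apply: subsetDl.
rewrite (restr_impl _ tla) restrD1 H /=.
rewrite (restr_impl _ tla) restrD1n; first by rewrite -(restr_impl _ ta).
by rewrite (disjointFr dis lf).
Qed.

Lemma key2 h f g tf tg l a :
  (forall s, implicant h s = implicant f s && implicant g s) ->
  [disjoint vars f & vars g] ->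
  tf \in SR f a -> tg \in SR g a -> l \in tf ->
  ~~ implicant h ((tf :|: tg) :\ l).
Proof.
move=> Hh dis; rewrite !inE => /andP[pf sf] /andP[pg sg] ltf.
have su : sat_term (tf :|: tg) a.
  apply/forallP => k; apply/implyP; rewrite inE => /orP[kf|kg].
    by move/forallP: sf => /(_ k) /implyP; apply.
  by move/forallP: sg => /(_ k) /implyP; apply.
have sl : sat_term ((tf :|: tg) :\ l) a by apply: sat_sub su; apply: subsetDl.
rewrite Hh negb_and; apply/orP; left.
rewrite (restr_impl _ sl) restrD1.
have -> : restr (vars f) (tf :|: tg) = tf.
  apply/setP => k; rewrite mem_restr in_setU; case kf: (k \in tf) => /=.
    by rewrite (PI_sub pf sf kf).
  case kg: (k \in tg) => //=.
  by rewrite (disjointFl dis (PI_sub pg sg kg)).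
by case/andP: pf => _ /forallP /(_ l) /implyP; apply.
Qed.

Lemma impl_and f g s :
  implicant (fun x => f x && g x) s = implicant f s && implicant g s.
Proof.
apply/idP/andP.
  move=> /forallP H; split; apply/forallP => b; apply/implyP => sb;
  by case/andP: (iapp (H b) sb).
case=> /forallP Hf /forallP Hg; apply/forallP => b; apply/implyP => sb.
by rewrite (iapp (Hf b) sb) (iapp (Hg b) sb).
Qed.

End S.

Theorem proposition14 (V : finType) (f g : assignment V -> bool) (a : assignment V) :
  [disjoint vars f & vars g] ->
  SR (fun x => f x && g x) a = [set t :|: t' | t in SR f a, t' in SR g a].
Proof.
move=> dis.
have Hh := impl_and f g.
have Hh' : forall s, implicant (fun x => f x && g x) s = implicant g s && implicant f s.
  by move=> s; rewrite Hh andbC.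
have dis' : [disjoint vars g & vars f] by rewrite disjoint_sym.
apply/setP => t; apply/idP/idP.
  move=> tin.
  have t1 := key1 Hh dis tin.
  have t2 := key1 Hh' dis' tin.
  move: tin; rewrite inE => /andP[/andP[it /forallP pt] ta].
  apply/imset2P; exists (restr (vars f) t) (restr (vars g) t) => //.
  apply/setP => l; rewrite in_setU !mem_restr; case lt: (l \in t) => //=.
  apply/esym/contraT => /norP[lf lg].
  move: (iapp (pt l) lt); rewrite Hh; move=> H; suff HH : implicant f (t :\ l) && implicant g (t :\ l) by rewrite HH in H.
  have tla : sat_term (t :\ l) a by apply: sat_sub ta; apply: subsetDl.
  rewrite Hh in it; case/andP: it => itf itg.
  rewrite (restr_impl _ tla) restrD1n // -(restr_impl _ ta) itf /=.
  by rewrite (restr_impl _ tla) restrD1n // -(restr_impl _ ta) itg.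
case/imset2P => tf tg tfin tgin ->.
move: (tfin) (tgin); rewrite !inE => /andP[/andP[itf _] sf] /andP[/andP[itg _] sg].
have su : sat_term (tf :|: tg) a.
  apply/forallP => k; apply/implyP; rewrite inE => /orP[kf|kg].
    by move/forallP: sf => /(_ k) /implyP; apply.
  by move/forallP: sg => /(_ k) /implyP; apply.
rewrite su andbT; apply/andP; split.
  rewrite Hh (impl_mono (subsetUl _ _) itf).
  exact: (impl_mono (subsetUr _ _) itg).
apply/forallP => l; apply/implyP; rewrite inE => /orP[lf|lg].
  exact: key2 Hh dis tfin tgin lf.
rewrite setUC; exact: key2 Hh' dis' tgin tfin lg.
Qed.
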